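(* Let $(X,Y)$ be a splitting of a finite Weyl group $W$, and let $x_0\in X$ and $y_0\in Y$ be the unique maximal elements of $X$ in left weak order and of $Y$ in right weak order respectively (so that $x_0y_0=w_0$). Define $\varphi,\psi:W\to W$ by $\varphi(u)=ux_0^{-1}$ and $\psi(u)=w_0y_0^{-1}uw_0=x_0uw_0$. Then $(\varphi(X),\psi(Y))$ is also a splitting of $W$, and its left-maximal and right-maximal elements are $x_0^{-1}$ and $x_0w_0=w_0y_0^{-1}w_0$ respectively.
   Context: $W$ is the Weyl group of a finite crystallographic root system, with Coxeter length $\ell$ and longest element $w_0$. Left weak order: $v\leq_L w$ iff $w=zv$ with $\ell(w)=\ell(z)+\ell(v)$; right weak order: $v\leq_R w$ iff $w=vz$ with $\ell(w)=\ell(v)+\ell(z)$. A pair $(X,Y)$ of subsets of $W$ is a splitting of $W$ if the map $X\times Y\to W$, $(x,y)\mapsto xy$, is a bijection with $\ell(xy)=\ell(x)+\ell(y)$ for all $x\in X,y\in Y$. For any splitting, $X$ has a unique maximal element in left weak order and $Y$ has a unique maximal element in right weak order, and their product is $w_0$. *)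

(* Defs.v *)
From HB Require Import structures.
From mathcomp Require Import all_boot all_order all_algebra.
From mathcomp Require Import reals.
Set Implicit Arguments. Unset Strict Implicit. Unset Printing Implicit Defensive.
Import Order.TTheory GRing.Theory Num.Theory.
Local Open Scope ring_scope.

Section WeylDefs.
Variables (R : realType) (n : nat).

Definition dotv (u v : 'rV[R]_n) : R := (u *m v^T) 0 0.

(* orthogonal reflection in the hyperplane orthogonal to a:
   x *m refl a = x - (2 (x,a)/(a,a)) a *)
Definition refl (a : 'rV[R]_n) : 'M[R]_n :=
  1%:M - (2 / dotv a a) *: (a^T *m a).

Definition is_root_system (Phi : seq 'rV[R]_n) : Prop :=
  [/\ uniq Phi,
      0 \notin Phi,
      (forall a b, a \in Phi -> b \in Phi -> b *m refl a \in Phi),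
      (forall a b, a \in Phi -> b \in Phi ->
         exists z : int, 2 * dotv b a / dotv a a = z%:~R) &
      (forall a (c : R), a \in Phi -> c *: a \in Phi -> c = 1 \/ c = -1)].

Definition inW (Phi : seq 'rV[R]_n) (w : 'M[R]_n) : Prop :=
  exists s : seq 'rV[R]_n,
    all (fun a => a \in Phi) s /\ w = foldr (fun a m => refl a *m m) 1%:M s.

(* A regular vector v determines the positive system
   Phi^+ = {a in Phi | (v,a) > 0}. *)
Definition regular (Phi : seq 'rV[R]_n) (v : 'rV[R]_n) : Prop :=
  forall a, a \in Phi -> dotv v a != 0.

(* Coxeter length w.r.t. this positive system: number of positive roots
   sent to negative roots. *)
Definition len (Phi : seq 'rV[R]_n) (v : 'rV[R]_n) (w : 'M[R]_n) : nat :=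
  count (fun a => (0 < dotv v a) && (dotv v (a *m w) < 0)) Phi.

Definition is_longest Phi v (w0 : 'M[R]_n) : Prop :=
  inW Phi w0 /\ forall w, inW Phi w -> (len Phi v w <= len Phi v w0)%N.

Definition leL Phi v (u w : 'M[R]_n) : Prop :=
  inW Phi u /\ inW Phi w /\
  exists z, inW Phi z /\ w = z *m u /\ len Phi v w = (len Phi v z + len Phi v u)%N.

Definition leR Phi v (u w : 'M[R]_n) : Prop :=
  inW Phi u /\ inW Phi w /\
  exists z, inW Phi z /\ w = u *m z /\ len Phi v w = (len Phi v u + len Phi v z)%N.

Definition splitting Phi v (X Y : 'M[R]_n -> Prop) : Prop :=
  [/\ (forall x, X x -> inW Phi x),
      (forall y, Y y -> inW Phi y),
      (forall w, inW Phi w ->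
         exists x y, [/\ X x, Y y & w = x *m y]),
      (forall x1 y1 x2 y2, X x1 -> Y y1 -> X x2 -> Y y2 ->
         x1 *m y1 = x2 *m y2 -> x1 = x2 /\ y1 = y2) &
      (forall x y, X x -> Y y ->
         len Phi v (x *m y) = (len Phi v x + len Phi v y)%N)].

Definition maxL Phi v (X : 'M[R]_n -> Prop) (x0 : 'M[R]_n) : Prop :=
  X x0 /\ forall x, X x -> leL Phi v x x0.
Definition maxR Phi v (Y : 'M[R]_n -> Prop) (y0 : 'M[R]_n) : Prop :=
  Y y0 /\ forall y, Y y -> leR Phi v y y0.

End WeylDefs.

(* Main.v *)
Require Import Defs.
From HB Require Import structures.
From mathcomp Require Import all_boot all_order all_algebra.
From mathcomp Require Import reals.
From mathcomp Require Import zify ring lra.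
Set Implicit Arguments. Unset Strict Implicit. Unset Printing Implicit Defensive.
Import Order.TTheory GRing.Theory Num.Theory.
Local Open Scope ring_scope.

Section Lin.
Variables (R : realType) (n : nat).
Local Notation dot := (@dotv R n).
Implicit Types (u w x y a b : 'rV[R]_n) (M : 'M[R]_n).

Lemma dotC u w : dot u w = dot w u.
Proof. by rewrite /dotv -[u *m w^T]trmxK trmx_mul trmxK mxE. Qed.

Lemma dotDl u w x : dot (u + w) x = dot u x + dot w x.
Proof. by rewrite /dotv mulmxDl mxE. Qed.
Lemma dotNl u x : dot (- u) x = - dot u x.
Proof. by rewrite /dotv mulNmx mxE. Qed.
Lemma dotBl u w x : dot (u - w) x = dot u x - dot w x.
Proof. by rewrite dotDl dotNl. Qed.
Lemma dotZl (c : R) u x : dot (c *: u) x = c * dot u x.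
Proof. by rewrite /dotv -scalemxAl mxE. Qed.
Lemma dotDr u w x : dot x (u + w) = dot x u + dot x w.
Proof. by rewrite dotC dotDl !(dotC x). Qed.
Lemma dotNr u x : dot x (- u) = - dot x u.
Proof. by rewrite dotC dotNl dotC. Qed.
Lemma dotBr u w x : dot x (u - w) = dot x u - dot x w.
Proof. by rewrite dotDr dotNr. Qed.
Lemma dotZr (c : R) u x : dot x (c *: u) = c * dot x u.
Proof. by rewrite dotC dotZl dotC. Qed.
Lemma dot0l x : dot 0 x = 0.
Proof. by rewrite /dotv mul0mx mxE. Qed.
Lemma dot0r x : dot x 0 = 0.
Proof. by rewrite dotC dot0l. Qed.

Lemma dot_mul u w M : dot (u *m M) w = dot u (w *m M^T).
Proof. by rewrite /dotv trmx_mul trmxK mulmxA. Qed.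

Lemma dot_sqr a : dot a a = \sum_j a 0 j ^+ 2.
Proof. by rewrite /dotv mxE; apply: eq_bigr => j _; rewrite mxE expr2. Qed.

Lemma dot_ge0 a : 0 <= dot a a.
Proof. by rewrite dot_sqr; apply: sumr_ge0 => j _; apply: sqr_ge0. Qed.

Lemma dot_eq0 a : dot a a = 0 -> a = 0.
Proof.
rewrite dot_sqr => /eqP; rewrite psumr_eq0; last by move=> j _; apply: sqr_ge0.
move=> /allP H; apply/matrixP => i j; rewrite mxE (ord1 i).
by have := H j (mem_index_enum j); rewrite sqrf_eq0 => /eqP.
Qed.

Lemma dot_gt0 a : a != 0 -> 0 < dot a a.
Proof.
move=> a0; rewrite lt_def dot_ge0 andbT; apply/eqP => /dot_eq0 H.
by rewrite H eqxx in a0.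
Qed.

Lemma mx_ext M1 M2 : (forall x : 'rV[R]_n, x *m M1 = x *m M2) -> M1 = M2.
Proof. by move=> H; apply/row_matrixP => i; rewrite !rowE H. Qed.

End Lin.

Section Refl.
Variables (R : realType) (n : nat).
Local Notation dot := (@dotv R n).
Implicit Types (u w x y a b : 'rV[R]_n) (M : 'M[R]_n).

Definition cc b a := 2 * dot b a / dot a a.

Lemma refl_act x a : x *m refl a = x - cc x a *: a.
Proof.
rewrite /refl mulmxBr mulmx1 -scalemxAr mulmxA [x *m a^T]mx11_scalar mul_scalar_mx.
by rewrite scalerA /cc mulrAC.
Qed.

Lemma refl_sym a : (refl a)^T = refl a.
Proof. by rewrite /refl linearB /= linearZ /= trmx_mul trmxK tr_scalar_mx. Qed.

Lemma cc_self a : a != 0 -> cc a a = 2.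
Proof. move=> a0; have := dot_gt0 a0; rewrite /cc => H; field; lra. Qed.

Lemma refl_self a : a != 0 -> a *m refl a = - a.
Proof. by move=> a0; rewrite refl_act cc_self // scaler_nat mulr2n opprD addrA subrr sub0r. Qed.

Lemma refl_invol a : a != 0 -> refl a *m refl a = 1%:M.
Proof.
move=> a0; apply: mx_ext => x; rewrite mulmxA !refl_act mulmx1.
have d0 := dot_gt0 a0.
rewrite /cc dotBl dotZl -addrA -opprD -scalerDl.
set k := (X in X *: a); have -> : k = 0.
  rewrite /k; field; lra.
by rewrite scale0r oppr0 addr0.
Qed.

Lemma refl_dot a x y : a != 0 -> dot (x *m refl a) (y *m refl a) = dot x y.
Proof. by move=> a0; rewrite dot_mul refl_sym -mulmxA refl_invol // mulmx1. Qed.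

Lemma cc_refl_conj a M : M *m M^T = 1%:M -> M^T *m M = 1%:M ->
  refl (a *m M) = M^T *m refl a *m M.
Proof.
move=> H1 H2; rewrite /refl.
have -> : dot (a *m M) (a *m M) = dot a a by rewrite dot_mul -mulmxA H1 mulmx1.
rewrite mulmxBr mulmx1 mulmxBl H2 -scalemxAr -scalemxAl.
by rewrite trmx_mul !mulmxA.
Qed.

End Refl.

Lemma int_aux (x y : int) : 0 < x -> 2 <= y -> x * y < 4 -> x = 1 /\ y <= 3.
Proof. move=> *; nia. Qed.
Lemma int_aux2 (x y : int) : 0 < x -> 0 < y -> x * y < 4 -> x = 1 \/ y = 1.
Proof. move=> *; nia. Qed.
Lemma int_aux3 (x : int) : 2 <= x -> x <= 3 -> x = 2 \/ x = 3.
Proof. move=> *; lia. Qed.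
Lemma int_aux4 (x : int) : 0 < x -> x = 1 \/ 2 <= x.
Proof. move=> *; lia. Qed.


Lemma count_lt (T : eqType) (P Q : pred T) (s : seq T) (e0 : T) :
  subpred P Q -> e0 \in s -> Q e0 -> ~~ P e0 -> (count P s < count Q s)%N.
Proof.
move=> PQ; elim: s => [//|y s IH] /=; rewrite inE => /orP[/eqP <-|xs] Qx Px.
  rewrite Qx (negbTE Px) add0n add1n ltnS; exact: sub_count.
rewrite -addnS; apply: leq_add; last exact: IH.
by case Py: (P y) => //; rewrite (PQ _ Py).
Qed.

Lemma count_split (T : Type) (P A : pred T) (s : seq T) :
  count P s = (count (fun c => P c && A c) s + count (fun c => P c && ~~ A c) s)%N.
Proof.
elim: s => [//|y s IH] /=; rewrite IH.
by case: (P y); case: (A y) => /=; lia.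
Qed.

Lemma count_two (T : eqType) (P : pred T) (s : seq T) (p q : T) :
  uniq s -> p \in s -> q \in s -> p != q ->
  count (fun c => P c && ((c == p) || (c == q))) s = (P p + P q)%N.
Proof.
move=> us xs ys xy.
have -> : count (fun c => P c && ((c == p) || (c == q))) s =
  (count (fun c => (c == p) && P p) s + count (fun c => (c == q) && P q) s)%N.
  elim: s {us xs ys} => [//|z s IH] /=; rewrite IH.
  have [->|zx] := eqVneq z p.
    by rewrite ?eqxx (negbTE xy) /=; case: (P p) => /=; lia.
  have [zq|zy] := eqVneq z q.
    by subst z; rewrite /=; case: (P q) => /=; lia.
  by rewrite /=; case: (P z) => /=; lia.
have cnt (z : T) Pz : z \in s -> count (fun c => (c == z) && Pz) s = Pz.
  move=> zs; case: Pz.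
    by rewrite (eq_count (a2 := pred1 z)) ?count_uniq_mem ?zs // => c /=; rewrite andbT.
  by rewrite (eq_count (a2 := pred0)) ?count_pred0 // => c /=; rewrite andbF.
by rewrite cnt // cnt.
Qed.


Section Weyl.
Variables (R : realType) (n : nat) (Phi : seq 'rV[R]_n) (v : 'rV[R]_n).
Hypothesis HR : is_root_system Phi.
Hypothesis Hv : regular Phi v.
Local Notation dot := (@dotv R n).
Local Notation len := (len Phi v).
Local Notation inW := (inW Phi).
Implicit Types (u x y a b c : 'rV[R]_n) (M z w : 'M[R]_n).

Definition prod (s : seq 'rV[R]_n) := foldr (fun a m => refl a *m m) 1%:M s.
Definition pos a := 0 < dot v a.

Lemma Phi_uniq : uniq Phi. Proof. by case: HR. Qed.
Lemma Phi_nz a : a \in Phi -> a != 0.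
Proof. by case: HR => _ H0 _ _ _ aP; apply: contraNneq H0 => <-. Qed.
Lemma Phi_refl a b : a \in Phi -> b \in Phi -> b *m refl a \in Phi.
Proof. by case: HR => _ _ H _ _; apply: H. Qed.
Lemma Phi_N a : a \in Phi -> - a \in Phi.
Proof. by move=> aP; rewrite -refl_self ?Phi_nz // Phi_refl. Qed.
Lemma Phi_int a b : a \in Phi -> b \in Phi -> exists z : int, cc b a = z%:~R.
Proof. by case: HR => _ _ _ H _; apply: H. Qed.
Lemma Phi_red a (k : R) : a \in Phi -> k *: a \in Phi -> k = 1 \/ k = -1.
Proof. by case: HR => _ _ _ _ H; apply: H. Qed.
Lemma Phi_dotv a : a \in Phi -> dot v a != 0.
Proof. exact: Hv. Qed.
Lemma Phi_neg a : a \in Phi -> ~~ pos a -> dot v a < 0.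
Proof.
move=> aP; rewrite /pos -leNgt le_eqVlt => /orP[/eqP H|//].
by have := Phi_dotv aP; rewrite H eqxx.
Qed.
Lemma posN a : pos (- a) = (dot v a < 0).
Proof. by rewrite /pos dotNr oppr_gt0. Qed.

Lemma prod_cat s1 s2 : prod (s1 ++ s2) = prod s1 *m prod s2.
Proof. by elim: s1 => [|a s IH] /=; rewrite ?mul1mx // IH mulmxA. Qed.

Lemma inW1 : inW 1%:M. Proof. by exists [::]. Qed.
Lemma inW_mul z1 z2 : inW z1 -> inW z2 -> inW (z1 *m z2).
Proof.
move=> [s1 [h1 ->]] [s2 [h2 ->]]; exists (s1 ++ s2); split.
  by rewrite all_cat h1 h2.
by have := prod_cat s1 s2.
Qed.
Lemma inW_refl a : a \in Phi -> inW (refl a).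
Proof. by move=> aP; exists [:: a]; rewrite /= aP mulmx1. Qed.

Lemma inW_ind (P : 'M[R]_n -> Prop) : P 1%:M ->
  (forall a m, a \in Phi -> inW m -> P m -> P (refl a *m m)) ->
  forall w, inW w -> P w.
Proof.
move=> H1 HS w [s [hs ->]]; elim: s hs => [|a s IH] //= /andP[aP hs].
apply: HS => //; last exact: IH.
by exists s.
Qed.

Lemma W_orth w : inW w -> w *m w^T = 1%:M /\ w^T *m w = 1%:M.
Proof.
move: w; apply: inW_ind; first by rewrite trmx1 mulmx1.
move=> a m aP _ [H1 H2]; rewrite trmx_mul refl_sym; split.
  by rewrite mulmxA -[refl a *m m *m m^T]mulmxA H1 mulmx1 refl_invol ?Phi_nz.
by rewrite mulmxA -[m^T *m refl a *m refl a]mulmxA refl_invol ?Phi_nz // mulmx1.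
Qed.
Lemma W_orth1 w : inW w -> w *m w^T = 1%:M. Proof. by move/W_orth=> []. Qed.
Lemma W_orth2 w : inW w -> w^T *m w = 1%:M. Proof. by move/W_orth=> []. Qed.

Lemma inW_tr w : inW w -> inW w^T.
Proof.
move: w; apply: inW_ind; first by rewrite trmx1; apply: inW1.
move=> a m aP _ H; rewrite trmx_mul refl_sym; apply: inW_mul => //.
exact: inW_refl.
Qed.

Lemma W_Phi_aux w : inW w -> forall a, a \in Phi -> a *m w \in Phi.
Proof.
move: w; apply: (@inW_ind (fun w => forall a, a \in Phi -> a *m w \in Phi)) => [a aP|b m bP _ IH a aP]; first by rewrite mulmx1.
by rewrite mulmxA IH // Phi_refl.
Qed.

Lemma W_Phi w a : inW w -> a \in Phi -> a *m w \in Phi.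
Proof. by move=> Hw; apply: W_Phi_aux. Qed.

Lemma invmx_W w : inW w -> invmx w = w^T.
Proof.
move=> Hw; have [wu _] := mulmx1_unit (W_orth1 Hw).
by rewrite -[invmx w]mulmx1 -(W_orth1 Hw) mulmxA mulVmx // mul1mx.
Qed.

Lemma W_dot w x y : inW w -> dot (x *m w) (y *m w) = dot x y.
Proof. by move=> Hw; rewrite dot_mul -mulmxA W_orth1 // mulmx1. Qed.

Lemma W_inj w x y : inW w -> x *m w = y *m w -> x = y.
Proof.
by move=> Hw H; rewrite -[x]mulmx1 -[y]mulmx1 -(W_orth1 Hw) !mulmxA H.
Qed.

Lemma perm_of (f : 'rV[R]_n -> 'rV[R]_n) :
  {in Phi &, injective f} -> {in Phi, forall a, f a \in Phi} ->
  perm_eq (map f Phi) Phi.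
Proof.
move=> finj fP.
have U : uniq (map f Phi) by rewrite map_inj_in_uniq // Phi_uniq.
have S : {subset map f Phi <= Phi} by move=> x /mapP[a aP ->]; apply: fP.
have [|_ E] := uniq_min_size U S; first by rewrite size_map.
exact: uniq_perm U Phi_uniq E.
Qed.

Lemma count_transfer (f : 'rV[R]_n -> 'rV[R]_n) (P : pred 'rV[R]_n) :
  {in Phi &, injective f} -> {in Phi, forall a, f a \in Phi} ->
  count P Phi = count (fun a => P (f a)) Phi.
Proof.
move=> finj fP; have /permP H := perm_of finj fP.
by rewrite -H count_map.
Qed.

Lemma len_tr w : inW w -> len w^T = len w.
Proof.
move=> Hw; rewrite /Defs.len (@count_transfer (fun b => - (b *m w))).
- apply: eq_count => b /=; rewrite dotNr oppr_gt0 mulNmx -mulmxA W_orth1 // mulmx1.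
  by rewrite dotNr oppr_lt0 andbC.
- by move=> x y _ _ /oppr_inj /(W_inj Hw).
- by move=> a aP; rewrite Phi_N // W_Phi.
Qed.

Lemma len_le w : (len w <= count pos Phi)%N.
Proof. by apply: sub_count => a /andP[]. Qed.

Lemma len1 : len 1%:M = 0%N.
Proof.
rewrite /Defs.len; apply/eqP; rewrite -leqn0 leqNgt -has_count; apply/hasP => -[a _].
by rewrite mulmx1 => /andP[H1 H2]; move: (lt_trans H2 H1); rewrite ltxx.
Qed.


Lemma dot_pos_aa a : a \in Phi -> 0 < dot a a.
Proof. by move=> aP; apply: dot_gt0; apply: Phi_nz. Qed.

Lemma CS_strict a b : a \in Phi -> b \in Phi -> b != a -> b != - a ->
  dot a b ^+ 2 < dot a a * dot b b.
Proof.
move=> aP bP ba bna; have aa := dot_pos_aa aP.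
set t := dot a b / dot a a; set d := b - t *: a.
have dd : dot d d = dot b b - dot a b ^+ 2 / dot a a.
  rewrite /d dotBl !dotBr !dotZl !dotZr (dotC b a) /t; field; lra.
have [/eqP d0|d0] := boolP (d == 0).
  have bt : b = t *: a by apply/eqP; rewrite -subr_eq0 -/d d0.
  have [t1|t1] : t = 1 \/ t = -1 by apply: Phi_red aP _; rewrite -bt.
    by move: ba; rewrite bt t1 scale1r eqxx.
  by move: bna; rewrite bt t1 scaleN1r eqxx.
by have := dot_gt0 d0; rewrite dd subr_gt0 ltr_pdivrMr // mulrC.
Qed.

Lemma cc_prod a b : a \in Phi -> b \in Phi -> b != a -> b != - a ->
  cc a b * cc b a < 4.
Proof.
move=> aP bP ba bna; have aa := dot_pos_aa aP; have bb := dot_pos_aa bP.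
have H := CS_strict aP bP ba bna.
have -> : cc a b * cc b a = 4 * (dot a b ^+ 2 / (dot a a * dot b b)).
  by rewrite /cc (dotC b a); field; rewrite !lt0r_neq0.
have h : dot a b ^+ 2 / (dot a a * dot b b) < 1.
  by rewrite ltr_pdivrMr ?mul1r // mulr_gt0.
lra.
Qed.

Lemma cc_int_prod a b : a \in Phi -> b \in Phi -> b != a -> b != - a ->
  0 < dot a b ->
  exists z1 z2 : int, [/\ cc a b = z1%:~R, cc b a = z2%:~R, (0 < z1)%R, (0 < z2)%R
     & (z1 * z2 < 4)%R].
Proof.
move=> aP bP ba bna ab.
have [z1 E1] := Phi_int bP aP; have [z2 E2] := Phi_int aP bP.
have aa := dot_pos_aa aP; have bb := dot_pos_aa bP.
exists z1, z2; split => //.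
- rewrite -(ltr0z R) -E1 /cc; apply: divr_gt0 => //; lra.
- rewrite -(ltr0z R) -E2 /cc (dotC b a); apply: divr_gt0 => //; lra.
- have := cc_prod aP bP ba bna; rewrite E1 E2 -intrM.
  by rewrite -[4 in X in X -> _]/((4:int)%:~R) ltr_int.
Qed.

Lemma rank2 a b : a \in Phi -> b \in Phi -> b != a -> b != - a ->
  0 < dot a b -> a - b \in Phi.
Proof.
move=> aP bP ba bna ab.
have [z1 [z2 [E1 E2 p1 p2 pr]]] := cc_int_prod aP bP ba bna ab.
have := int_aux2 p1 p2 pr.
case=> [z1e|z2e].
  by rewrite -[b]scale1r -[1]/(1%:~R) -z1e -E1 -refl_act Phi_refl.
rewrite -opprB Phi_N //.
by rewrite -[a]scale1r -[1]/(1%:~R) -z2e -E2 -refl_act Phi_refl.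
Qed.

Definition decomp a := has (fun b => has (fun c => pos b && pos c && (a == b + c)) Phi) Phi.
Definition indec a := [&& a \in Phi, pos a & ~~ decomp a].

Lemma indec_Phi a : indec a -> a \in Phi. Proof. by case/and3P. Qed.
Lemma indec_pos a : indec a -> pos a. Proof. by case/and3P. Qed.
Lemma indec_nosum a b c : indec a -> b \in Phi -> c \in Phi -> pos b -> pos c ->
  a = b + c -> False.
Proof.
case/and3P=> _ _ /negP nd bP cP pb pc e; apply: nd.
by apply/hasP; exists b => //; apply/hasP; exists c => //; rewrite pb pc e eqxx.
Qed.

Lemma pos_neq_neg a b : pos a -> pos b -> b != - a.
Proof.
move=> pa pb; apply/eqP => e; move: pb; rewrite e posN => H.
by move: (lt_trans H pa); rewrite ltxx.
Qed.

Lemma indec_sub al b : indec al -> b \in Phi -> pos b -> b != al ->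
  cc al b = 1 -> b - al \in Phi /\ pos (b - al).
Proof.
move=> ia bP pb ba E.
have aP := indec_Phi ia.
have H : al - b \in Phi by rewrite -[b in al - b]scale1r -E -refl_act Phi_refl.
have [pab|npab] := boolP (pos (al - b)).
  by exfalso; apply: (indec_nosum ia H bP pab pb); rewrite subrK.
split; first by rewrite -opprB Phi_N.
by rewrite -opprB posN; apply: Phi_neg.
Qed.

Lemma vec_eq (x y : 'rV[R]_n) : (forall j, x 0 j = y 0 j) -> x = y.
Proof. by move=> H; apply/matrixP => i j; rewrite (ord1 i) H. Qed.

Lemma indec_perm al b : indec al -> b \in Phi -> pos b -> b != al ->
  pos (b *m refl al).
Proof.
move=> ia bP pb ba; have aP := indec_Phi ia; have pa := indec_pos ia.
have aa := dot_pos_aa aP.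
have [k Ek] := Phi_int aP bP.
rewrite refl_act Ek /pos dotBr dotZr.
have [ab|ab] := leP (dot b al) 0.
  have : k%:~R <= (0:R) by rewrite -Ek /cc; apply: mulr_le0_ge0; [apply: mulr_ge0_le0 => //; lra| rewrite invr_ge0; lra].
  move: pa pb; rewrite /pos => pa pb kk.
  have : k%:~R * dot v al <= 0 by apply: mulr_le0_ge0 => //; lra.
  lra.
have bna := pos_neq_neg pa pb.
have ab' : 0 < dot al b by rewrite dotC.
have [z1 [z2 [E1 E2 p1 p2 pr]]] := cc_int_prod aP bP ba bna ab'.
have kz : k = z2 by apply/eqP; rewrite -(eqr_int R) -Ek -E2.
rewrite subr_gt0 ltNge; apply/negP => Hle.
set c := k%:~R *: al - b.
have cP : c \in Phi by rewrite /c -opprB Phi_N // -Ek -refl_act Phi_refl.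
have pc : pos c.
  rewrite /c /pos dotBr dotZr subr_gt0 lt_def Hle andbT.
  apply/negP => /eqP e; have := Phi_dotv (Phi_refl aP bP).
  by rewrite refl_act Ek dotBr dotZr e subrr eqxx.
have [k1|k2] : (k = 1 \/ 2 <= k)%R by apply: int_aux4; rewrite kz.
  apply: (indec_nosum ia bP cP pb pc).
  by rewrite /c k1 scale1r addrC subrK.
have kz2 : (2 <= z2)%R by rewrite -kz.
have [z1e z23] := int_aux p1 kz2 pr.
have E1' : cc al b = 1 by rewrite E1 z1e.
have [bsP pbs] := indec_sub ia bP pb ba E1'.
have ca : c != al.
  apply/eqP => e.
  have eb : b = (k%:~R - 1) *: al.
    by apply: vec_eq => j; move/matrixP: e => /(_ 0 j); rewrite !mxE => e; lra.
  have ebP : (k%:~R - 1) *: al \in Phi by rewrite -eb.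
  have [e1|e1] := Phi_red aP ebP.
    by move: ba; rewrite eb e1 scale1r eqxx.
  have : (k%:~R : R) = 0 by lra.
  by move/eqP; rewrite intr_eq0 => /eqP k0; rewrite k0 in k2.
have cna := pos_neq_neg pa pc.
have ac : 0 < dot al c.
  rewrite /c dotBr dotZr; move: ab Ek; rewrite /cc (dotC b al) => ab Ek.
  have : dot al b = k%:~R * dot al al / 2.
    by rewrite -Ek; field; rewrite lt0r_neq0.
  move=> ->. have : (2:R) <= k%:~R by rewrite -[2]/((2:int)%:~R) ler_int.
  move=> k2'; have : 0 < k%:~R * dot al al by apply: mulr_gt0 => //; lra.
  lra.
have [y1 [y2 [F1 F2 q1 q2 qr]]] := cc_int_prod aP cP ca cna ac.
have kc : cc c al = k%:~R.
  by rewrite /cc /c dotBl dotZl -Ek /cc (dotC b al); field; rewrite lt0r_neq0.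
have y2k : y2 = k by apply/eqP; rewrite -(eqr_int R) -F2 kc.
have k2'' : (2 <= y2)%R by rewrite y2k.
have [y1e _] := int_aux q1 k2'' qr.
have F1' : cc al c = 1 by rewrite F1 y1e.
have [csP pcs] := indec_sub ia cP pc ca F1'.
have sum : (b - al) + (c - al) = (k%:~R - 2) *: al.
  by apply: vec_eq => j; rewrite /c !mxE; ring.
have [k2e|k3e] : (k = 2 \/ k = 3)%R by apply: int_aux3; rewrite // kz.
  move: sum; rewrite k2e subrr scale0r => /eqP; rewrite addr_eq0 => /eqP e.
  have e' : c - al = - (b - al) by rewrite e opprK.
  by move: pcs; rewrite e' posN => H; move: (lt_trans H pbs); rewrite ltxx.
apply: (indec_nosum ia bsP csP pbs pcs).
by rewrite sum k3e -[3]/((3:int)%:~R) -[2]/((2:int)%:~R) -intrB /= scale1r.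
Qed.
Definition hgt b := count (fun c => pos c && (dot v c < dot v b)) Phi.

Lemma hgt_lt b c : c \in Phi -> pos c -> dot v c < dot v b -> (hgt c < hgt b)%N.
Proof.
move=> cP pc cb; apply: (count_lt (e0 := c)) => //.
- by move=> x /andP[-> /lt_trans]; apply.
- by rewrite pc cb.
- by rewrite ltxx andbF.
Qed.

Lemma dot_sumrF x (l : seq 'rV[R]_n) (F : 'rV[R]_n -> 'rV[R]_n) :
  dot x (\sum_(g <- l) F g) = \sum_(g <- l) dot x (F g).
Proof.
by elim: l => [|g l IH]; rewrite ?big_nil ?dot0r // !big_cons dotDr IH.
Qed.

Lemma dot_sumr x (l : seq 'rV[R]_n) :
  dot x (\sum_(g <- l) g) = \sum_(g <- l) dot x g.
Proof.
by elim: l => [|g l IH]; rewrite ?big_nil ?dot0r // !big_cons dotDr IH.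
Qed.

Lemma sum_mulmx (l : seq 'rV[R]_n) M :
  (\sum_(g <- l) g) *m M = \sum_(g <- l) (g *m M).
Proof.
by elim: l => [|g l IH]; rewrite ?big_nil ?mul0mx // !big_cons mulmxDl IH.
Qed.

Lemma cone b : b \in Phi -> pos b ->
  exists l, all indec l /\ b = \sum_(g <- l) g.
Proof.
move: {2}(hgt b).+1 (ltnSn (hgt b)) => m; elim: m b => [//|m IH] b hb bP pb.
have [ib|nib] := boolP (indec b).
  by exists [:: b]; rewrite /= ib big_cons big_nil addr0.
have : decomp b by move: nib; rewrite /indec bP pb /= negbK.
case/hasP => c cP /hasP [d dP /andP[/andP[pc pd] /eqP e]].
have Hc : dot v c < dot v b by rewrite e dotDr ltrDl.
have Hd : dot v d < dot v b by rewrite e dotDr ltrDr.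
have [lc [ilc ec]] := IH c (leq_trans (hgt_lt cP pc Hc) hb) cP pc.
have [ld [ild ed]] := IH d (leq_trans (hgt_lt dP pd Hd) hb) dP pd.
by exists (lc ++ ld); rewrite all_cat ilc ild big_cat /= e ec ed.
Qed.

Lemma sum_pos_ex (l : seq 'rV[R]_n) (F : 'rV[R]_n -> R) :
  0 < \sum_(g <- l) F g -> exists2 g, g \in l & 0 < F g.
Proof.
elim: l => [|a l IH]; first by rewrite big_nil ltxx.
rewrite big_cons; have [Fa|Fa] := ltP 0 (F a).
  by move=> _; exists a; rewrite ?inE ?eqxx.
move=> H; have [|g gl Fg] := IH; first by rewrite -(ltrD2l (F a)) addr0; lra.
by exists g; rewrite // inE gl orbT.
Qed.

Lemma exists_indec b : b \in Phi -> pos b -> exists2 al, indec al & 0 < dot b al.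
Proof.
move=> bP pb; have [l [il e]] := cone bP pb.
have := dot_pos_aa bP; rewrite {2}e dot_sumr => /sum_pos_ex [g gl bg].
by exists g => //; apply: (allP il).
Qed.

Lemma reflN b : refl (- b) = refl b.
Proof.
rewrite /refl; have -> : (- b)^T = - b^T by apply/matrixP => i j; rewrite !mxE.
by rewrite dotNl dotNr opprK mulNmx mulmxN opprK.
Qed.

Definition inS w := exists s, all indec s /\ w = prod s.

Lemma inS_mul w1 w2 : inS w1 -> inS w2 -> inS (w1 *m w2).
Proof.
move=> [s1 [h1 ->]] [s2 [h2 ->]]; exists (s1 ++ s2).
by rewrite all_cat h1 h2 prod_cat.
Qed.

Lemma inS_indec al : indec al -> inS (refl al).
Proof. by move=> ia; exists [:: al]; rewrite /= ia mulmx1. Qed.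

Lemma refl_orth a : a \in Phi -> refl a *m (refl a)^T = 1%:M /\ (refl a)^T *m refl a = 1%:M.
Proof. by move=> aP; rewrite refl_sym refl_invol ?Phi_nz. Qed.

Lemma refl_inS b : b \in Phi -> inS (refl b).
Proof.
suff Hp : forall b, b \in Phi -> pos b -> inS (refl b).
  move=> bP; have [pb|npb] := boolP (pos b); first exact: Hp.
  by rewrite -reflN; apply: Hp; rewrite ?Phi_N // posN Phi_neg.
move=> {}b; move: {2}(hgt b).+1 (ltnSn (hgt b)) => m; elim: m b => [//|m IH] b hb bP pb.
have [al ia ab] := exists_indec bP pb.
have aP := indec_Phi ia; have pa := indec_pos ia.
have [->|ba] := eqVneq b al; first exact: inS_indec.
set b' := b *m refl al.
have b'P : b' \in Phi by apply: Phi_refl.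
have pb' : pos b' by apply: indec_perm.
have Hlt : dot v b' < dot v b.
  rewrite /b' refl_act dotBr dotZr gtrBl; apply: mulr_gt0 => //.
  by rewrite /cc; apply: divr_gt0; [lra | exact: dot_pos_aa].
have := IH b' (leq_trans (hgt_lt b'P pb' Hlt) hb) b'P pb'.
have eb : b = b' *m refl al by rewrite /b' -mulmxA refl_invol ?Phi_nz // mulmx1.
have [o1 o2] := refl_orth aP.
rewrite eb cc_refl_conj // refl_sym => H.
by apply: inS_mul; [apply: inS_mul => //|]; apply: inS_indec.
Qed.

Lemma inW_inS w : inW w -> inS w.
Proof.
move: w; apply: inW_ind; first by exists [::].
by move=> a m aP _ H; apply: inS_mul => //; apply: refl_inS.
Qed.

Lemma inS_inW w : inS w -> inW w.
Proof.
move=> [s [hs ->]]; exists s; split => //.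
by apply/allP => a /(allP hs) /indec_Phi.
Qed.

Lemma prod_inW s : all indec s -> inW (prod s).
Proof. by move=> hs; apply: inS_inW; exists s. Qed.

Lemma pos_refl_other al c : indec al -> c \in Phi -> c != al -> c != - al ->
  pos (c *m refl al) = pos c.
Proof.
move=> ia cP ca cna; have [pc|npc] := boolP (pos c); first exact: indec_perm.
have ncP : - c \in Phi by apply: Phi_N.
have pnc : pos (- c) by rewrite posN Phi_neg.
have : pos (- c *m refl al).
  apply: indec_perm => //; apply: contraNneq cna => e.
  by rewrite -e opprK.
by rewrite mulNmx posN => H; apply/negbTE; rewrite /pos -leNgt ltW.
Qed.

Lemma len_refl al w : indec al -> inW w ->
  (len (refl al *m w) + ~~ pos (al *m w) = len w + pos (al *m w))%N.
Proof.
move=> ia Hw; have aP := indec_Phi ia; have pa := indec_pos ia.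
have anz := Phi_nz aP.
have sW := inW_refl aP.
set Q := fun c => pos (c *m refl al) && (dot v (c *m w) < 0).
have E1 : len (refl al *m w) = count Q Phi.
  rewrite /Defs.len (@count_transfer (fun b => b *m refl al)).
  - by apply: eq_count => b; rewrite /Q mulmxA -[b *m refl al *m refl al]mulmxA refl_invol // mulmx1.
  - by move=> x y _ _; apply: W_inj.
  - by move=> a a'; apply: Phi_refl.
set L := fun c => pos c && (dot v (c *m w) < 0).
have E2 : len w = count L Phi by [].
set A := fun c => (c == al) || (c == - al).
have naa : al != - al by apply: pos_neq_neg.
have C : count (fun c => Q c && ~~ A c) Phi = count (fun c => L c && ~~ A c) Phi.
  apply: eq_in_count => c cP; rewrite /A negb_or.
  have [ca|ca] := eqVneq c al; first by rewrite !andbF.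
  have [cna|cna] := eqVneq c (- al); first by rewrite !andbF.
  by rewrite /= !andbT /Q /L pos_refl_other.
rewrite E1 E2 (count_split Q A) (count_split L A) C.
rewrite /A (count_two Q Phi_uniq aP (Phi_N aP) naa).
rewrite (count_two L Phi_uniq aP (Phi_N aP) naa).
have awP : al *m w \in Phi by apply: W_Phi.
have negw : (dot v (al *m w) < 0) = ~~ pos (al *m w).
  by apply/idP/idP => [H|/(Phi_neg awP)//]; rewrite /pos -leNgt ltW.
have Qa : Q al = false by rewrite /Q refl_self // posN ltNge (ltW pa).
have Qna : Q (- al) = pos (al *m w).
  by rewrite /Q mulNmx refl_self // opprK pa mulNmx dotNr oppr_lt0.
have La : L al = ~~ pos (al *m w) by rewrite /L pa negw.
have Lna : L (- al) = false by rewrite /L posN ltNge (ltW pa).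
rewrite Qa Qna La Lna; case: (pos (al *m w)) => /=; lia.
Qed.


Lemma len_refl_pos al w : indec al -> inW w -> pos (al *m w) ->
  len (refl al *m w) = (len w).+1.
Proof. by move=> ia Hw p; have := len_refl ia Hw; rewrite p /= addn0 addn1. Qed.

Lemma len_refl_neg al w : indec al -> inW w -> ~~ pos (al *m w) ->
  (len (refl al *m w)).+1 = len w.
Proof. by move=> ia Hw p; have := len_refl ia Hw; rewrite p (negbTE p) /= addn0 addn1. Qed.

Lemma len_refl_le al w : indec al -> inW w -> (len (refl al *m w) <= (len w).+1)%N.
Proof.
move=> ia Hw; have [p|p] := boolP (pos (al *m w)).
  by rewrite len_refl_pos.
by rewrite -(len_refl_neg ia Hw p) ltnW.
Qed.

Lemma len_word t : all indec t -> (len (prod t) <= size t)%N.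
Proof.
elim: t => [|a t IH] /=; first by rewrite len1.
move=> /andP[ia it]; apply: leq_trans (len_refl_le ia (prod_inW it)) _.
by rewrite ltnS IH.
Qed.

Lemma find_split t g : all indec t -> g \in Phi -> pos g -> ~~ pos (g *m prod t) ->
  exists t1 b t2, t = t1 ++ b :: t2 /\ g *m prod t1 = b.
Proof.
elim: t g => [|b t IH] g /=; first by move=> _ _ pg; rewrite mulmx1 pg.
move=> /andP[ib it] gP pg; have [->|gb] := eqVneq g b.
  by move=> _; exists [::], b, t; rewrite /= mulmx1.
rewrite mulmxA => H.
have g'P : g *m refl b \in Phi by apply: Phi_refl => //; apply: indec_Phi.
have [t1 [b' [t2 [-> e]]]] := IH _ it g'P (indec_perm ib gP pg gb) H.
by exists (b :: t1), b', t2; rewrite /= mulmxA.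
Qed.

Lemma delete a t : indec a -> all indec t -> ~~ pos (a *m prod t) ->
  exists t', [/\ all indec t', size t' = (size t).-1 & prod (a :: t) = prod t'].
Proof.
move=> ia it H.
have [t1 [b [t2 [et e]]]] := find_split it (indec_Phi ia) (indec_pos ia) H.
have it12 : all indec t1 /\ all indec t2.
  by move: it; rewrite et all_cat /= => /and3P[-> _ ->].
case: it12 => it1 it2.
exists (t1 ++ t2); split.
- by rewrite all_cat it1 it2.
- by rewrite et !size_cat /= addnS.
have Hs := prod_inW it1.
have Hb : refl b = (prod t1)^T *m refl a *m prod t1.
  by rewrite -e cc_refl_conj // ?W_orth1 ?W_orth2.
rewrite et /= prod_cat /= Hb !mulmxA.
rewrite -[refl a *m prod t1 *m (prod t1)^T]mulmxA W_orth1 // mulmx1.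
by rewrite refl_invol ?Phi_nz ?indec_Phi // mul1mx prod_cat.
Qed.

Lemma exchange s : all indec s -> (len (prod s) < size s)%N ->
  exists s', [/\ all indec s', (size s' < size s)%N & prod s' = prod s].
Proof.
elim: s => [|a t IH] //= /andP[ia it] Hlt.
have [Ht|Ht] := ltnP (len (prod t)) (size t).
  have [t' [it' st' et']] := IH it Ht.
  by exists (a :: t'); rewrite /= ia it' et' ltnS.
have Hw := prod_inW it.
have np : ~~ pos (a *m prod t).
  apply/negP => p; move: Hlt; rewrite len_refl_pos // ltnS => H.
  by move: (leq_ltn_trans Ht H); rewrite ltnn.
have [t' [it' st' et']] := delete ia it np.
exists t'; split; first exact: it'.
  by rewrite st' ltnS leq_pred.
by rewrite -[RHS]/(prod (a :: t)) et'.
Qed.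

Lemma len0_id w : inW w -> len w = 0%N -> w = 1%:M.
Proof.
move=> /inW_inS [s [hs ->]] H.
move: {2}(size s).+1 (ltnSn (size s)) => m; elim: m s hs H => [//|m IH] s hs H hm.
case: s hs H hm => [//|a t] hs H hm.
have Hl : (len (prod (a :: t)) < size (a :: t))%N by rewrite H.
have [s' [hs' ss' es']] := exchange hs Hl.
rewrite -es'; apply: IH => //; first by rewrite es'.
exact: leq_trans ss' hm.
Qed.

Lemma sum_neg_lt (l : seq 'rV[R]_n) (F : 'rV[R]_n -> R) :
  l != [::] -> (forall g, g \in l -> F g < 0) -> \sum_(g <- l) F g < 0.
Proof.
elim: l => [//|a l IH] _ H; rewrite big_cons.
have Ha : F a < 0 by apply: H; rewrite inE eqxx.
case: l IH H => [|b l] IH H; first by rewrite big_nil addr0.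
have H' : forall g, g \in b :: l -> F g < 0.
  by move=> g gl; apply: H; rewrite inE gl orbT.
have := IH isT H'; lra.
Qed.

Lemma longest_full w0 : is_longest Phi v w0 -> len w0 = count pos Phi.
Proof.
move=> [Hw0 Hmax]; apply/eqP; rewrite eqn_leq len_le /=; apply/negP => /negP.
rewrite -ltnNge => Hlt.
have : has (fun b => pos b && pos (b *m w0)) Phi.
  apply: contraLR Hlt => /hasPn H; rewrite -leqNgt.
  rewrite /Defs.len (@eq_in_count _ pos (fun c => pos c && (dot v (c *m w0) < 0)) Phi) //.
  move=> c cP /=; case pc: (pos c) => //=.
  apply/esym; apply: Phi_neg; first exact: W_Phi.
  by move: (H c cP); rewrite pc.
case/hasP => b bP /andP[pb pbw].
have [l [il eb]] := cone bP pb.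
have [/hasP [al al_l /andP[ia pal]]|/hasPn H] :=
  boolP (has (fun al => indec al && pos (al *m w0)) l).
  have := Hmax _ (inW_mul (inW_refl (indec_Phi ia)) Hw0).
  by rewrite len_refl_pos // ltnn.
have ln : l != [::].
  by apply/eqP => l0; move: (Phi_nz bP); rewrite eb l0 big_nil eqxx.
have : dot v (b *m w0) < 0.
  rewrite eb sum_mulmx dot_sumrF; apply: sum_neg_lt => // g gl.
  have ig : indec g by apply: (allP il).
  apply: Phi_neg; first by apply: W_Phi => //; apply: indec_Phi.
  by move: (H g gl); rewrite ig.
by move: pbw; rewrite /pos => P1 P2; move: (lt_trans P2 P1); rewrite ltxx.
Qed.


Lemma w0_facts w0 : is_longest Phi v w0 ->
  [/\ inW w0, w0 *m w0 = 1%:M, w0^T = w0 &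
      forall w, inW w -> len (w *m w0) = (count pos Phi - len w)%N].
Proof.
move=> Hl; have Hw0 := Hl.1; have lw0 := longest_full Hl.
have negpos : forall c, c \in Phi -> pos c -> dot v (c *m w0) < 0.
  move=> c cP pc; apply: Phi_neg; first exact: W_Phi.
  apply/negP => pcw.
  have := count_split pos (fun c => dot v (c *m w0) < 0) Phi.
  rewrite -/(Defs.len _ _ _) -lw0 -[X in X = _]addn0 => /eqP; rewrite eqn_add2l eq_sym.
  rewrite -leqn0 leqNgt -has_count => /hasP; apply; exists c => //.
  rewrite pc /= -leNgt ltW //.
have negE : forall c, c \in Phi -> (dot v (c *m w0) < 0) = pos c.
  move=> c cP; apply/idP/idP => [H|]; last exact: negpos.
  have [//|npc] := boolP (pos c); have := negpos (- c) (Phi_N cP).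
  rewrite posN (Phi_neg cP npc) mulNmx dotNr oppr_lt0 => /(_ isT) H'.
  by move: (lt_trans H H'); rewrite ltxx.
have lenw : forall w, inW w -> len (w *m w0) = (count pos Phi - len w)%N.
  move=> w Hw.
  have -> : len (w *m w0) = count (fun c => pos c && ~~ (dot v (c *m w) < 0)) Phi.
    rewrite /Defs.len; apply: eq_in_count => c cP /=.
    rewrite mulmxA negE ?W_Phi //; congr (_ && _).
    apply/idP/idP => [pcw|]; first by rewrite -leNgt ltW.
    by rewrite -leNgt le_eqVlt => /orP[/eqP e|//]; move: (Phi_dotv (W_Phi Hw cP)); rewrite e eqxx.
  by rewrite (count_split pos (fun c => dot v (c *m w) < 0) Phi) addKn.
have w00 : w0 *m w0 = 1%:M.
  apply: len0_id; first exact: inW_mul.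
  by rewrite lenw // lw0 subnn.
split => //.
by rewrite -[w0^T]mulmx1 -w00 mulmxA W_orth2 // mul1mx.
Qed.


Lemma main_aux (w0 x0 y0 : 'M[R]_n) (X Y : 'M[R]_n -> Prop) :
  is_longest Phi v w0 ->
  splitting Phi v X Y -> maxL Phi v X x0 -> maxR Phi v Y y0 ->
  let X' := fun u : 'M[R]_n => exists x : 'M[R]_n, X x /\ u = x *m invmx x0 in
  let Y' := fun u : 'M[R]_n => exists y : 'M[R]_n, Y y /\ u = x0 *m y *m w0 in
  [/\ splitting Phi v X' Y',
      maxL Phi v X' (invmx x0),
      maxR Phi v Y' (x0 *m w0) &
      x0 *m w0 = w0 *m invmx y0 *m w0].
Proof.
move=> Hl [HX HY Hcov Huniq Hadd] [Xx0 HmX] [Yy0 HmY] X' Y'; subst X' Y'.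
have [Hw0 w00 w0T lenw] := w0_facts Hl.
set N := count pos Phi.
have lenN : forall w, (len w <= N)%N by move=> w; apply: len_le.
have Hx0 := HX _ Xx0; have Hy0 := HY _ Yy0.
rewrite (invmx_W Hx0) (invmx_W Hy0).
have [x1 [y1 [X1 Y1 e1]]] := Hcov _ inW1.
have l1 : (len x1 + len y1 = 0)%N by rewrite -Hadd // -e1 len1.
have ex1 : x1 = 1%:M by apply: len0_id; [exact: HX | lia].
have ey1 : y1 = 1%:M by apply: len0_id; [exact: HY | lia].
rewrite ex1 in X1; rewrite ey1 in Y1.
have x0y0 : x0 *m y0 = w0.
  have [x [y [Xx Yy exy]]] := Hcov _ Hw0.
  have [_ [_ [zx [_ [_ lx]]]]] := HmX _ Xx.
  have [_ [_ [zy [_ [_ ly]]]]] := HmY _ Yy.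
  have lw0 : len w0 = N by apply: longest_full.
  have lxy : len (x *m y) = N by rewrite -exy.
  rewrite Hadd // in lxy.
  have lx0y0 : len (x0 *m y0) = N.
    apply/eqP; rewrite eqn_leq lenN Hadd //=; lia.
  have H0 : len (x0 *m y0 *m w0) = 0%N.
    by rewrite (lenw (x0 *m y0)) ?lx0y0 ?subnn //; apply: inW_mul.
  have := len0_id (inW_mul (inW_mul Hx0 Hy0) Hw0) H0 => e.
  by rewrite -[x0 *m y0]mulmx1 -w00 mulmxA e mul1mx.
have lenu : forall x : 'M[R]_n, X x -> x *m x0^T = (x0 *m x^T)^T /\
    len (x *m x0^T) = (len x0 - len x)%N /\ (len x <= len x0)%N.
  move=> x Xx; have [Hx [_ [z [Hz [ez lz]]]]] := HmX _ Xx.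
  have ut : x *m x0^T = z^T by rewrite ez trmx_mul mulmxA W_orth1 // mul1mx.
  split; first by rewrite trmx_mul trmxK.
  by rewrite ut len_tr // lz; lia.
split.
- split.
  + by move=> u [x [Xx ->]]; apply: inW_mul; [exact: HX | exact: inW_tr].
  + by move=> u [y [Yy ->]]; apply: inW_mul => //; apply: inW_mul => //; exact: HY.
  + move=> w Hw; have [x [y [Xx Yy exy]]] := Hcov _ (inW_mul Hw Hw0).
    exists (x *m x0^T), (x0 *m y *m w0); split.
    * by exists x.
    * by exists y.
    * rewrite !mulmxA -[x *m x0^T *m x0]mulmxA W_orth2 // mulmx1 -exy.
      by rewrite -mulmxA w00 mulmx1.
  + move=> u1 u2 u1' u2' [x [Xx ->]] [y [Yy ->]] [x' [Xx' ->]] [y' [Yy' ->]] e.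
    have e' : x *m y = x' *m y'.
      move: e; rewrite !mulmxA -[x *m x0^T *m x0]mulmxA -[x' *m x0^T *m x0]mulmxA.
      rewrite W_orth2 // !mulmx1 => e.
      by rewrite -[x *m y]mulmx1 -w00 mulmxA e -mulmxA w00 mulmx1.
    by have [-> ->] := Huniq _ _ _ _ Xx Yy Xx' Yy' e'.
  + move=> u1 u2 [x [Xx ->]] [y [Yy ->]].
    have Hx := HX _ Xx; have Hy := HY _ Yy.
    have [_ [lu lxx0]] := lenu _ Xx.
    have -> : x *m x0^T *m (x0 *m y *m w0) = x *m y *m w0.
      by rewrite !mulmxA -[x *m x0^T *m x0]mulmxA W_orth2 // mulmx1.
    have Hxy : inW (x *m y) by apply: inW_mul.
    have Hx0y : inW (x0 *m y) by apply: inW_mul.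
    rewrite lu (lenw _ Hxy) (lenw _ Hx0y) (Hadd _ _ Xx Yy) (Hadd _ _ Xx0 Yy).
    have := lenN (x0 *m y); rewrite (Hadd _ _ Xx0 Yy) => h; lia.
- split; first by exists 1%:M; rewrite mul1mx.
  move=> u [x [Xx ->]]; have Hx := HX _ Xx.
  have [_ [lu lxx0]] := lenu _ Xx.
  split; first by apply: inW_mul => //; exact: inW_tr.
  split; first exact: inW_tr.
  exists x^T; split; first exact: inW_tr.
  split; first by rewrite mulmxA W_orth2 // mul1mx.
  by rewrite lu !len_tr //; lia.
- split; first by exists 1%:M; rewrite mulmx1.
  move=> u [y [Yy ->]]; have Hy := HY _ Yy.
  have lx0y := lenN (x0 *m y); rewrite (Hadd _ _ Xx0 Yy) in lx0y.
  split; first by apply: inW_mul => //; apply: inW_mul.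
  split; first exact: inW_mul.
  exists (w0 *m y^T *m w0); split.
    by apply: inW_mul => //; apply: inW_mul => //; exact: inW_tr.
  split.
    rewrite !mulmxA -[x0 *m y *m w0 *m w0]mulmxA w00 mulmx1.
    by rewrite -[x0 *m y *m y^T]mulmxA W_orth1 // mulmx1.
  have Hwy : inW (w0 *m y^T) by apply: inW_mul => //; exact: inW_tr.
  have Hx0w0 : inW x0 by [].
  have Hx0y : inW (x0 *m y) by apply: inW_mul.
  rewrite (lenw _ Hx0w0 ) (lenw _ Hx0y) (lenw _ Hwy) (Hadd _ _ Xx0 Yy).
  have -> : len (w0 *m y^T) = len (y *m w0).
    by rewrite -len_tr // trmx_mul trmxK w0T.
  rewrite (lenw _ Hy) -/N; have := lenN y => h; lia.
- by rewrite -{2}x0y0 -[x0 *m y0 *m y0^T]mulmxA W_orth1 // mulmx1.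
Qed.

End Weyl.

Unset Implicit Arguments.
Set Strict Implicit.

Theorem proposition6p2 (R : realType) (n : nat) (Phi : seq 'rV[R]_n)
  (v : 'rV[R]_n) (w0 x0 y0 : 'M[R]_n) (X Y : 'M[R]_n -> Prop) :
  is_root_system Phi -> regular Phi v -> is_longest Phi v w0 ->
  splitting Phi v X Y -> maxL Phi v X x0 -> maxR Phi v Y y0 ->
  let X' := fun u => exists x, X x /\ u = x *m invmx x0 in
  let Y' := fun u => exists y, Y y /\ u = x0 *m y *m w0 in
  [/\ splitting Phi v X' Y',
      maxL Phi v X' (invmx x0),
      maxR Phi v Y' (x0 *m w0) &
      x0 *m w0 = w0 *m invmx y0 *m w0].
Proof. by move=> HR Hv; apply: main_aux. Qed.
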